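(* Let $G$ be a group with identity $e$, $A$ a finite set with $|A|\ge2$, and $S\subseteq G$ a finite subset with $e\in S$ and $|S|\ge3$. Suppose $(\mathcal P,f)$ generates a local map $\mu:A^S\to A$, with $f$ well-behaved and $|\mathcal P|=|A|$. Then $\mathrm{mms}(\mu)=S\setminus\{s\}$ for some $s\in S\setminus\{e\}$, or $\mathrm{mms}(\mu)=S$.
   Context: $A^S$ is the set of functions $S\to A$. A local map $\mu:A^S\to A$ defines the cellular automaton $\tau:A^G\to A^G$, $\tau(x)(g)=\mu((g^{-1}\cdot x)|_S)$, where $(g\cdot x)(h)=x(g^{-1}h)$. A finite $T\subseteq G$ is a memory set of $\tau$ if some local map $A^T\to A$ defines $\tau$; $\mathrm{mms}(\mu)$ is the intersection of all memory sets of the cellular automaton defined by $\mu$. The pair $(\mathcal P,f)$ generates $\mu$ if $\mathcal P=\{z\in A^S:\mu(z)\neq z(e)\}$ and $f:\mathcal P\to A$ is the restriction of $\mu$ to $\mathcal P$. The function $f$ is well-behaved if for all $p,q\in\mathcal P$: $p(e)=q(e)$ if and only if $f(p)=f(q)$. *)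

(* Defs.v *)
From Stdlib Require List.
From mathcomp Require Import all_boot.
Set Implicit Arguments. Unset Strict Implicit. Unset Printing Implicit Defensive.

Record group := Group {
  gcarrier :> Type;
  gmul : gcarrier -> gcarrier -> gcarrier;
  ginv : gcarrier -> gcarrier;
  gone : gcarrier;
  gmulA : forall x y z, gmul x (gmul y z) = gmul (gmul x y) z;
  gmul1l : forall x, gmul gone x = x;
  gmul1r : forall x, gmul x gone = x;
  gmulVl : forall x, gmul (ginv x) x = gone;
  gmulVr : forall x, gmul x (ginv x) = gone
}.

Section CA.
Variables (G : group) (A : finType).

(* Subsets of G are predicates; A^T is the type of functions T -> A. *)
Definition gset := G -> Prop.
Definition pat (T : gset) := {g : G | T g} -> A.

Definition finite_gset (T : gset) : Prop :=
  exists l : list G, forall g, T g <-> List.In g l.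

Definition restr (T : gset) (x : G -> A) : pat T := fun t => x (proj1_sig t).

Definition act (g : G) (x : G -> A) : G -> A := fun h => x (gmul (ginv g) h).

Definition CA_of (T : gset) (mu : pat T -> A) : (G -> A) -> (G -> A) :=
  fun x g => mu (@restr T (act (ginv g) x)).

Definition memory_set (tau : (G -> A) -> (G -> A)) (T : gset) : Prop :=
  finite_gset T /\ exists nu : pat T -> A, forall x g, tau x g = CA_of nu x g.

Definition mms (S : gset) (mu : pat S -> A) : gset :=
  fun g => forall T, memory_set (CA_of mu) T -> T g.

(* (P, f) generates mu (requires e in S to evaluate z(e)) *)
Definition generates (S : gset) (He : S (gone G)) (mu : pat S -> A)
  (P : pat S -> Prop) (f : {z : pat S | P z} -> A) : Prop :=
  (forall z, P z <-> mu z <> z (exist _ (gone G) He)) /\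
  (forall z (Hz : P z), f (exist _ z Hz) = mu z).

Definition well_behaved (S : gset) (He : S (gone G))
  (P : pat S -> Prop) (f : {z : pat S | P z} -> A) : Prop :=
  forall p q : {z : pat S | P z},
    proj1_sig p (exist _ (gone G) He) = proj1_sig q (exist _ (gone G) He)
    <-> f p = f q.

Definition same_card_as_A (X : Type) (P : X -> Prop) : Prop :=
  exists h : {x : X | P x} -> A, bijective h.

Definition at_least_3 (S : gset) : Prop :=
  exists a b c : G, [/\ S a, S b & S c] /\ [/\ a <> b, a <> c & b <> c].

End CA.

(* Main.v *)
Require Import Defs.
From mathcomp Require Import all_boot.
From Stdlib Require Import Classical ClassicalEpsilon ProofIrrelevance FunctionalExtensionality.
From mathcomp Require Import zify.
Set Implicit Arguments. Unset Strict Implicit.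

Section Helpers.
Variables (G : group) (A : finType) (S : gset G) (He : S (gone G)) (mu : pat A S -> A).

Definition upd (z : pat A S) (s : G) (a : A) : pat A S :=
  fun t => match excluded_middle_informative (proj1_sig t = s) with left _ => a | right _ => z t end.

Lemma upd_eq z s a t : proj1_sig t = s -> upd z s a t = a.
Proof. by rewrite /upd; case: excluded_middle_informative. Qed.

Lemma upd_neq z s a t : proj1_sig t <> s -> upd z s a t = z t.
Proof. by rewrite /upd; case: excluded_middle_informative. Qed.

Definition dep g := exists z z' : pat A S,
  (forall t, proj1_sig t <> g -> z t = z' t) /\ mu z <> mu z'.

Lemma indep g : ~ dep g -> forall z a, mu (upd z g a) = mu z.
Proof.
move=> nd z a; apply: NNPP => hne; apply: nd; exists (upd z g a), z; split=> // t ht.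
exact: upd_neq.
Qed.

Definition eS : {g : G | S g} := exist _ (gone G) He.

Lemma notP_mu (P : pat A S -> Prop) (hP : forall z, P z <-> mu z <> z eS) z :
  ~ P z -> mu z = z eS.
Proof. move=> nP; apply: NNPP=> ne; apply: nP; exact/hP. Qed.

Lemma two_elems : 2 <= #|A| -> exists a0 a1 : A, a0 <> a1.
Proof.
move/card_gt1P=> [x [y [_ _ /eqP nxy]]]; by exists x, y.
Qed.

Lemma orr (p q : Prop) : p \/ q -> ~ p -> q.
Proof. tauto. Qed.

Lemma dep_e (hA : 2 <= #|A|) (P : pat A S -> Prop)
  (hP : forall z, P z <-> mu z <> z eS) (hcard : same_card_as_A A P)
  s1 s2 (H1 : S s1) (H2 : S s2) (n1 : s1 <> gone G) (n2 : s2 <> gone G)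
  (n12 : s1 <> s2) : dep (gone G).
Proof.
apply: NNPP => nd; have ind := indep nd.
have [a0 [a1 na]] := two_elems hA.
pose base : pat A S := fun _ => a0.
pose L u v := upd (upd base s1 u) s2 v.
have key : forall u v, P (upd (L u v) (gone G) a0) \/ P (upd (L u v) (gone G) a1).
  move=> u v; apply: NNPP => /not_or_and [nP0 nP1]; apply: na.
  have E0 := notP_mu hP nP0; have E1 := notP_mu hP nP1.
  rewrite upd_eq // in E0; rewrite upd_eq // in E1.
  by rewrite -E0 -E1 !ind.
pose F (uv : A * A) : {z | P z} :=
  match excluded_middle_informative (P (upd (L uv.1 uv.2) (gone G) a0)) with
  | left H => exist _ _ H
  | right n => exist _ (upd (L uv.1 uv.2) (gone G) a1) (orr (key uv.1 uv.2) n)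
  end.
have Fv : forall uv, exists c, proj1_sig (F uv) = upd (L uv.1 uv.2) (gone G) c.
  by move=> uv; rewrite /F; case: excluded_middle_informative => ?; eexists; reflexivity.
pose t1 : {g : G | S g} := exist _ s1 H1.
pose t2 : {g : G | S g} := exist _ s2 H2.
have ev1 : forall u v c, upd (L u v) (gone G) c t1 = u.
  by move=> u v c; rewrite upd_neq // /L upd_neq //= upd_eq.
have ev2 : forall u v c, upd (L u v) (gone G) c t2 = v.
  by move=> u v c; rewrite upd_neq // /L upd_eq.
have Finj : injective F.
  move=> [u v] [u' v'] E.
  have [c Ec] := Fv (u, v); have [c' Ec'] := Fv (u', v').
  have E1 := f_equal (fun p => proj1_sig p t1) E.
  have E2 := f_equal (fun p => proj1_sig p t2) E.
  rewrite /= Ec Ec' !ev1 in E1; rewrite /= Ec Ec' !ev2 in E2.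
  by move: E1 E2 => /= -> ->.
case: hcard => h hb.
have hinj : injective (h \o F) by apply: inj_comp => //; exact: bij_inj.
have := @leq_card _ _ (h \o F) hinj; rewrite card_prod => H; nia.
Qed.


Lemma indep_unique (hA : 2 <= #|A|) (P : pat A S -> Prop)
  (hP : forall z, P z <-> mu z <> z eS) (hcard : same_card_as_A A P)
  s (Hs : S s) (ns : s <> gone G) (nd : ~ dep s)
  s' (Hs' : S s') (ns' : s' <> gone G) (nss : s' <> s) : dep s'.
Proof.
have ind := indep nd.
have [a0 [a1 na]] := two_elems hA.
case: hcard => h hb; case: (hb) => h' hh' h'h.
pose p0 := h' a0; pose z0 := proj1_sig p0.
have Pz0 : P z0 := proj2_sig p0.
have mz0 : mu z0 <> z0 eS := proj1 (hP z0) Pz0.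
have linP : forall a, P (upd z0 s a).
  move=> a; apply: NNPP=> nP; have := notP_mu hP nP.
  by rewrite upd_neq /= 1?ind //; apply: nesym.
pose ts : {g : G | S g} := exist _ s Hs.
pose ts' : {g : G | S g} := exist _ s' Hs'.
pose line a : {z | P z} := exist _ (upd z0 s a) (linP a).
have linj : injective (h \o line).
  move=> a a' /(bij_inj hb) E.
  have := f_equal (fun p => proj1_sig p ts) E; by rewrite /= !upd_eq.
have [g2 c1 c2] := injF_bij linj.
pose b := if z0 ts' == a0 then a1 else a0.
have nb : b <> z0 ts'.
  rewrite /b; case: eqP => [-> | ne]; [exact: nesym | exact: nesym].
have nP : ~ P (upd z0 s' b).
  move=> Pq; pose q : {z | P z} := exist _ _ Pq.
  have Eq : q = line (g2 (h q)) by apply: (bij_inj hb); symmetry; exact: (c2 (h q)).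
  have := f_equal (fun p => proj1_sig p ts') Eq.
  by rewrite /= upd_eq // upd_neq.
exists z0, (upd z0 s' b); split.
  by move=> t ht; rewrite upd_neq.
rewrite (notP_mu hP nP) upd_neq //=; exact: nesym.
Qed.

Lemma ginv1 : ginv (gone G) = gone G.
Proof. by have := gmulVr (gone G); rewrite gmul1l. Qed.

Lemma actE (x : G -> A) v : act (ginv (gone G)) x v = x v.
Proof. by rewrite /act !ginv1 gmul1l. Qed.

Lemma mms_S (hSfin : finite_gset S) g : mms mu g -> S g.
Proof. move=> H; apply: H; split=> //; by exists mu. Qed.

Lemma filter_ex (s : G) (l : list G) :
  exists l', forall g, (List.In g l /\ g <> s) <-> List.In g l'.
Proof.
elim: l => [|x l [l' IH]]; first by exists nil; move=> g /=; tauto.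
case: (classic (x = s)) => [xs | xs].
  exists l' => g /=; rewrite -IH; split; last tauto.
  case=> [[E | ?] ng]; last tauto.
  by exfalso; apply: ng; rewrite -E.
exists (x :: l') => g /=; rewrite -IH; split.
  case=> [[E | ?] ?]; tauto.
case=> [E | ]; last tauto.
by split; [left | rewrite -E].
Qed.

Lemma mms_indep (a0 : A) (hSfin : finite_gset S) s (nd : ~ dep s) : ~ mms mu s.
Proof.
move=> H.
pose T : gset G := fun g => S g /\ g <> s.
have : T s; last by case.
apply: H; split.
  case: hSfin => l hl; have [l' hl'] := filter_ex s l.
  exists l' => g; rewrite -hl' /T hl; tauto.
pose nu (w : pat A T) : A := mu (fun t : {g : G | S g} =>
  match excluded_middle_informative (proj1_sig t = s) with
  | left _ => a0
  | right n => w (exist _ (proj1_sig t) (conj (proj2_sig t) n)) end).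
exists nu => x g.
rewrite /CA_of /nu -(indep nd _ a0) /upd /restr.
reflexivity.
Qed.

Definition ext (a0 : A) (z : pat A S) : G -> A := fun h =>
  match excluded_middle_informative (S h) with
  | left H => z (exist _ h H) | right _ => a0 end.

Lemma CA_ext a0 z : CA_of mu (ext a0 z) (gone G) = mu z.
Proof.
rewrite /CA_of; congr mu; apply: functional_extensionality => [[v Hv]].
rewrite /restr actE /ext /=; case: excluded_middle_informative => [H' | //].
by rewrite (proof_irrelevance _ H' Hv).
Qed.

Lemma mms_dep (a0 : A) g (Hg : S g) (hd : dep g) : mms mu g.
Proof.
move=> T [Tfin [nu Hnu]]; apply: NNPP => nT.
case: hd => z [z' [hz hne]]; apply: hne.
rewrite -(CA_ext a0 z) -(CA_ext a0 z') !Hnu /CA_of; congr nu.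
apply: functional_extensionality => [[v Hv]].
rewrite /restr !actE /ext /=; case: excluded_middle_informative => // H.
apply: hz => /= E; apply: nT; by rewrite -E.
Qed.

End Helpers.

Theorem mainTheorem10 (G : group) (A : finType) (S : gset G)
  (hA : 2 <= #|A|) (hSfin : finite_gset S) (He : S (gone G))
  (hS3 : at_least_3 S)
  (mu : pat A S -> A) (P : pat A S -> Prop) (f : {z : pat A S | P z} -> A)
  (hgen : generates He mu f) (hwb : well_behaved He f)
  (hcard : same_card_as_A A P) :
  (exists s : G, S s /\ s <> gone G /\
     forall g, mms mu g <-> (S g /\ g <> s)) \/
  (forall g, mms mu g <-> S g).
Proof.
have hP := proj1 hgen.
have [a0 [a1 _]] := two_elems hA.
have de : dep mu (gone G).
  case: hS3 => a [b [c [[Ha Hb Hc] [nab nac nbc]]]].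
  case: (classic (a = gone G)) => [ea | na].
    subst a; apply: (dep_e hA hP hcard Hb Hc) => //; exact: nesym.
  case: (classic (b = gone G)) => [eb | nb].
    subst b; apply: (dep_e hA hP hcard Ha Hc) => //; exact: nesym.
  exact: (dep_e hA hP hcard Ha Hb).
case: (classic (exists s, S s /\ s <> gone G /\ ~ dep mu s)) => [[s [Hs [ns nd]]] | hno].
  left; exists s; split=> //; split=> // g; split.
    move=> Hm; split; first exact: (mms_S hSfin Hm).
    by move=> E; subst g; exact: (mms_indep a0 hSfin nd Hm).
  case=> Hg ng; apply: (mms_dep a0 Hg).
  case: (classic (g = gone G)) => [-> // | ngo].
  exact: (indep_unique hA hP hcard Hs ns nd Hg ngo ng).
right=> g; split; first exact: mms_S.
move=> Hg; apply: (mms_dep a0 Hg).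
case: (classic (g = gone G)) => [-> // | ngo].
apply: NNPP => nd; apply: hno; by exists g.
Qed.
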